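(* Suppose Assumption 1 (context) holds. For any $u,v\in\mathbb{D}$ and any $j\in\{1,\dots,\widehat n\}$ such that $u_i=v_i$ for all $i\ne j$, we have $|\nabla_jd(u)-\nabla_jd(v)|\le L_j\|u-v\|$, where $L_j=\frac{\|A_j\|^2}{n^2\mu}$ if $j\le n$, $L_j=\frac{\|B_{j-n,:}\|^2}{\mu}$ if $n<j\le n+p$, and $L_j=\frac{L_{g_{j-n-p}}^2}{\mu}$ if $j>n+p$.
   Context: Integers $n,t\ge1$, $p,m\ge0$; $A\in\mathbb{R}^{t\times n}$ with columns $A_j$; $B\in\mathbb{R}^{p\times t}$ with rows $B_{j,:}$; $b\in\mathbb{R}^p$; $f:\mathbb{R}^t\to\mathbb{R}$; $g_i:\mathbb{R}^t\to\mathbb{R}$ ($i\le m$). Assumption 1 includes: $f$ is $\mu$-strongly convex ($\mu>0$); each $g_i$ is convex and every subgradient of $g_i$ has norm at most $L_{g_i}$ (plus convex $M$-Lipschitz loss functions, a Slater point, and finite optimal value for the associated constrained problem). $\widehat n=n+p+m$, $\mathbb{D}=\{u\in\mathbb{R}^{\widehat n}:u_{n+p+1},\dots,u_{\widehat n}\ge0\}$. For $u\in\mathbb{D}$: $L_f(x,u)=f(x)+\langle u_{1:n},A^Tx/n\rangle+\langle u_{n+1:n+p},Bx+b\rangle+\sum_{i=1}^mu_{n+p+i}g_i(x)$, $x^*(u)=\arg\min_xL_f(x,u)$ (unique), $d(u)=-L_f(x^*(u),u)$, which is differentiable on $\mathbb{D}$ with $\nabla d(u)=-[(A^Tx^*(u)/n)^T,(Bx^*(u)+b)^T,g_1(x^*(u)),\dots,g_m(x^*(u))]^T$;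 $\nabla_jd(u)$ is its $j$-th entry. *)

(* Defs.v *)
From HB Require Import structures.
From mathcomp Require Import all_boot all_order all_algebra.
From mathcomp Require Import reals.
Set Implicit Arguments. Unset Strict Implicit. Unset Printing Implicit Defensive.
Import Order.TTheory GRing.Theory Num.Theory.
Local Open Scope ring_scope.

Section Defs.
Variable R : realType.

Definition dotv {t : nat} (x y : 'cV[R]_t) : R := \sum_(i < t) x i 0 * y i 0.

Definition mnorm {a b : nat} (M : 'M[R]_(a, b)) : R :=
  Num.sqrt (\sum_(i < a) \sum_(j < b) M i j ^+ 2).

Definition strongly_convex {t : nat} (mu : R) (f : 'cV[R]_t -> R) : Prop :=
  forall (x y : 'cV[R]_t) (th : R), 0 <= th -> th <= 1 ->
    f (th *: x + (1 - th) *: y) <=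
      th * f x + (1 - th) * f y - mu / 2 * th * (1 - th) * mnorm (x - y) ^+ 2.

Definition convex_fun {t : nat} (g : 'cV[R]_t -> R) : Prop :=
  forall (x y : 'cV[R]_t) (th : R), 0 <= th -> th <= 1 ->
    g (th *: x + (1 - th) *: y) <= th * g x + (1 - th) * g y.

Definition subgradient {t : nat} (g : 'cV[R]_t -> R) (x s : 'cV[R]_t) : Prop :=
  forall y : 'cV[R]_t, g x + dotv s (y - x) <= g y.

Definition inD {n p m : nat} (u : 'cV[R]_(n + p + m)) : Prop :=
  forall k : 'I_m, 0 <= u (rshift (n + p) k) 0.

Definition Lf {t n p m : nat} (A : 'M[R]_(t, n)) (B : 'M[R]_(p, t))
  (b : 'cV[R]_p) (f : 'cV[R]_t -> R) (g : 'I_m -> 'cV[R]_t -> R)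
  (x : 'cV[R]_t) (u : 'cV[R]_(n + p + m)) : R :=
  f x
  + \sum_(i < n) u (lshift m (lshift p i)) 0 * ((A^T *m x) i 0 / n%:R)
  + \sum_(k < p) u (lshift m (rshift n k)) 0 * (B *m x + b) k 0
  + \sum_(k < m) u (rshift (n + p) k) 0 * g k x.

(* j-th entry of grad d(u), where x = x^*(u) *)
Definition grad_d_j {t n p m : nat} (A : 'M[R]_(t, n)) (B : 'M[R]_(p, t))
  (b : 'cV[R]_p) (g : 'I_m -> 'cV[R]_t -> R)
  (x : 'cV[R]_t) (j : 'I_(n + p + m)) : R :=
  match split j with
  | inl j1 => match split j1 with
              | inl i => - ((A^T *m x) i 0 / n%:R)
              | inr k => - ((B *m x + b) k 0)
              end
  | inr k => - g k x
  end.

Definition Lconst {t n p m : nat} (A : 'M[R]_(t, n)) (B : 'M[R]_(p, t))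
  (Lg : 'I_m -> R) (mu : R) (j : 'I_(n + p + m)) : R :=
  match split j with
  | inl j1 => match split j1 with
              | inl i => mnorm (col i A) ^+ 2 / (n%:R ^+ 2 * mu)
              | inr k => mnorm (row k B) ^+ 2 / mu
              end
  | inr k => Lg k ^+ 2 / mu
  end.

End Defs.

(* Main.v *)
Require Import Defs.
From HB Require Import structures.
From mathcomp Require Import all_boot all_order all_algebra.
From mathcomp Require Import boolp classical_sets reals.
From mathcomp Require Import ring lra.
Import Order.TTheory GRing.Theory Num.Theory.
Local Open Scope ring_scope.

Section Helpers.
Set Implicit Arguments. Unset Strict Implicit.
Variable R : realType.

Lemma splitL m n (i : 'I_m) : split (lshift n i) = inl i.
Proof. exact: (unsplitK (inl i)). Qed.
Lemma splitR m n (i : 'I_n) : split (rshift m i) = inr i.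
Proof. exact: (unsplitK (inr i)). Qed.

Lemma CS t (F G : 'I_t -> R) :
  `| \sum_i F i * G i | <= Num.sqrt (\sum_i F i ^+ 2) * Num.sqrt (\sum_i G i ^+ 2).
Proof.
have E : \sum_i \sum_j (F i * G j - F j * G i) ^+ 2 =
   \sum_i \sum_j (F i ^+ 2 * G j ^+ 2) + \sum_i \sum_j (F j ^+ 2 * G i ^+ 2)
   - \sum_i \sum_j (2 * ((F i * G i) * (F j * G j))).
  rewrite -big_split -sumrB; apply: eq_bigr => i _.
  rewrite -big_split -sumrB; apply: eq_bigr => j _ /=; ring.
have E1 : \sum_i \sum_j (F i ^+ 2 * G j ^+ 2) = (\sum_i F i ^+ 2) * (\sum_i G i ^+ 2).
  by rewrite mulr_suml; apply: eq_bigr => i _; rewrite mulr_sumr.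
have E2 : \sum_i \sum_j (F j ^+ 2 * G i ^+ 2) = (\sum_i F i ^+ 2) * (\sum_i G i ^+ 2).
  rewrite mulrC mulr_suml; apply: eq_bigr => i _; rewrite mulr_sumr.
  by apply: eq_bigr => j _; rewrite mulrC.
have E3 : \sum_i \sum_j (2 * ((F i * G i) * (F j * G j))) = 2 * (\sum_i F i * G i) ^+ 2.
  rewrite expr2 mulr_suml mulr_sumr; apply: eq_bigr => i _.
  rewrite mulr_sumr mulr_sumr; apply: eq_bigr => j _; ring.
have P : 0 <= \sum_i \sum_j (F i * G j - F j * G i) ^+ 2.
  by apply: sumr_ge0 => i _; apply: sumr_ge0 => j _; apply: sqr_ge0.
rewrite E E1 E2 E3 in P.
rewrite -sqrtrM; last by apply: sumr_ge0 => i _; apply: sqr_ge0.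
rewrite -sqrtr_sqr; apply: ler_wsqrtr; lra.
Qed.

Lemma dotvDr t (x y z : 'cV[R]_t) : dotv x (y + z) = dotv x y + dotv x z.
Proof. by rewrite /dotv -big_split; apply: eq_bigr => i _; rewrite mxE mulrDr. Qed.
Lemma dotvDl t (x y z : 'cV[R]_t) : dotv (y + z) x = dotv y x + dotv z x.
Proof. by rewrite /dotv -big_split; apply: eq_bigr => i _; rewrite mxE mulrDl. Qed.
Lemma dotvZr t (x y : 'cV[R]_t) a : dotv x (a *: y) = a * dotv x y.
Proof. by rewrite /dotv mulr_sumr; apply: eq_bigr => i _; rewrite mxE mulrCA. Qed.
Lemma dotvZl t (x y : 'cV[R]_t) a : dotv (a *: y) x = a * dotv y x.
Proof. by rewrite /dotv mulr_sumr; apply: eq_bigr => i _; rewrite mxE mulrA. Qed.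
Lemma dotv0l t (x : 'cV[R]_t) : dotv 0 x = 0.
Proof. by rewrite /dotv big1 // => i _; rewrite mxE mul0r. Qed.
Lemma dotv_delta t (x : 'cV[R]_t) k : dotv x (delta_mx k 0) = x k 0.
Proof.
rewrite /dotv (bigD1 k) //= mxE !eqxx mulr1 big1 ?addr0 // => i ne.
by rewrite mxE (negPf ne) mulr0.
Qed.
Lemma dotvC t (x y : 'cV[R]_t) : dotv x y = dotv y x.
Proof. by apply: eq_bigr => i _; rewrite mulrC. Qed.

Lemma mnorm_col t (x : 'cV[R]_t) : mnorm x = Num.sqrt (\sum_i x i 0 ^+ 2).
Proof. by rewrite /mnorm; congr Num.sqrt; apply: eq_bigr => i _; rewrite big_ord1. Qed.

Lemma dotv_CS t (x y : 'cV[R]_t) : `|dotv x y| <= mnorm x * mnorm y.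
Proof. by rewrite !mnorm_col; apply: CS. Qed.

Definition supp {t} k (v : 'cV[R]_t) := forall i : 'I_t, (k <= i)%N -> v i 0 = 0.

Lemma real1 (a bb x y G1 G2 : R) : 0 < a -> 0 < bb ->
  a / (a + bb) * x + (1 - a / (a + bb)) * y <= a / (a + bb) * G1 + (1 - a / (a + bb)) * G2 ->
  (x - G1) / bb <= (G2 - y) / a.
Proof.
move=> ha hb H.
have hab : 0 < a + bb by lra.
have H2 : a * x + bb * y <= a * G1 + bb * G2.
  have e1 : a / (a + bb) * x + (1 - a / (a + bb)) * y = (a * x + bb * y) / (a + bb).
    by field; lra.
  have e2 : a / (a + bb) * G1 + (1 - a / (a + bb)) * G2 = (a * G1 + bb * G2) / (a + bb).
    by field; lra.
  by move: H; rewrite e1 e2 ler_pM2r // invr_gt0.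
rewrite ler_pdivrMr // mulrAC ler_pdivlMr //; nra.
Qed.

Lemma ext_step t (G : 'cV[R]_t -> R) (hG : convex_fun G) k (hk : (k < t)%N) (s : 'cV[R]_t) :
  (forall v, supp k v -> dotv s v <= G v) ->
  exists s', forall v, supp k.+1 v -> dotv s' v <= G v.
Proof.
move=> IH.
pose k0 := Ordinal hk.
pose e : 'cV[R]_t := delta_mx k0 0.
have suppC : forall (w1 w2 : 'cV[R]_t) (c1 c2 : R), supp k w1 -> supp k w2 -> supp k (c1 *: w1 + c2 *: w2).
  by move=> w1 w2 c1 c2 h1 h2 i hi; rewrite !mxE (h1 i hi) (h2 i hi) !mulr0 addr0.
have key : forall w bb v a, supp k w -> supp k v -> 0 < bb -> 0 < a ->
    (dotv s w - G (w - bb *: e)) / bb <= (G (v + a *: e) - dotv s v) / a.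
  move=> w bb v a hw hv hb ha.
  apply: real1 => //.
  set th := a / (a + bb).
  have th0 : 0 <= th by rewrite /th divr_ge0 // ltW // ltr_wpDr // ltW.
  have th1 : th <= 1 by rewrite /th ler_pdivrMr ?mul1r ?lerDl ?ltW //; lra.
  have eq1 : th * bb = (1 - th) * a by rewrite /th; field; lra.
  have EP : th *: (w - bb *: e) + (1 - th) *: (v + a *: e) = th *: w + (1 - th) *: v.
    rewrite scalerBr scalerDr !scalerA eq1 addrACA addNr addr0 //.
  have := hG (w - bb *: e) (v + a *: e) th th0 th1; rewrite EP.
  have := IH _ (suppC _ _ th (1 - th) hw hv).
  rewrite dotvDr !dotvZr; lra.
pose S : set R := fun sg => exists w bb, supp k w /\ 0 < bb /\ sg = (dotv s w - G (w - bb *: e)) / bb.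
have supp0 : supp k (0 : 'cV[R]_t) by move=> i _; rewrite mxE.
have Sne : (S !=set0)%classic.
  by exists ((dotv s 0 - G (0 - 1 *: e)) / 1); exists 0, 1; split => //; split => //; lra.
have hub : has_ubound S.
  exists ((G (0 + 1 *: e) - dotv s 0) / 1) => sg [w [bb [hw [hb ->]]]].
  by apply: key => //; lra.
pose c := sup S.
have c_ge : forall w bb, supp k w -> 0 < bb -> (dotv s w - G (w - bb *: e)) / bb <= c.
  move=> w bb hw hb; apply: (ub_le_sup hub); exists w, bb; split => //.
have c_le : forall v a, supp k v -> 0 < a -> c <= (G (v + a *: e) - dotv s v) / a.
  move=> v a hv ha; apply: ge_sup => // sg [w [bb [hw [hb ->]]]]; exact: key.
have main : forall v' a, supp k v' -> dotv s v' + a * c <= G (v' + a *: e).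
  move=> v' a hv'.
  case: (ltrgtP a 0) => ha.
  - have := c_ge v' (- a) hv'; rewrite oppr_gt0 => /(_ ha).
    rewrite scaleNr opprK ler_pdivrMr ?oppr_gt0 //; lra.
  - have := c_le v' a hv' ha; rewrite ler_pdivlMr //; lra.
  - by rewrite ha scale0r addr0 mul0r addr0; apply: IH.
exists (s + (c - dotv s e) *: e) => v hv.
pose a := v k0 0.
have hv' : supp k (v - a *: e).
  move=> i hi; rewrite !mxE.
  case: (eqVneq i k0) => [->|ne].
    by rewrite !eqxx mulr1 subrr.
  have hi' : (k.+1 <= i)%N.
    by rewrite ltn_neqAle hi andbT; apply: contra ne => /eqP ek; apply/eqP/val_inj.
  by rewrite (hv i hi') mulr0 subrr.
have dec : forall w, supp k w ->
    dotv (s + (c - dotv s e) *: e) (w + a *: e) = dotv s w + a * c.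
  move=> w hw; rewrite dotvDl dotvZl !dotvDr !dotvZr.
  have -> : dotv e w = 0 by rewrite dotvC dotv_delta (hw k0) //=.
  rewrite /e !dotv_delta mxE !eqxx mulr1; ring.
by have := main _ a hv'; rewrite -dec // subrK.
Qed.

Lemma minorant t (G : 'cV[R]_t -> R) (hG : convex_fun G) (G0 : G 0 = 0) :
  exists s, forall v, dotv s v <= G v.
Proof.
have H : forall k, (k <= t)%N -> exists s, forall v, supp k v -> dotv s v <= G v.
  elim=> [|k IH] hk.
    exists 0 => v hv.
    have -> : v = 0 by apply/matrixP => i j; rewrite ord1 mxE; apply: hv.
    by rewrite dotv0l G0.
  have [s hs] := IH (ltnW hk).
  exact: (ext_step hG hk hs).
have [s hs] := H t (leqnn t).
by exists s => v; apply: hs => i; rewrite leqNgt ltn_ord.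
Qed.

Lemma subgrad_exists t (g : 'cV[R]_t -> R) (hg : convex_fun g) x :
  exists s, subgradient g x s.
Proof.
pose G := fun y => g (x + y) - g x.
have hG : convex_fun G.
  move=> y1 y2 th h0 h1; rewrite /G.
  have -> : x + (th *: y1 + (1 - th) *: y2) = th *: (x + y1) + (1 - th) *: (x + y2).
    by rewrite !scalerDr addrACA -scalerDl subrKC scale1r.
  have := hg (x + y1) (x + y2) th h0 h1; lra.
have G0 : G 0 = 0 by rewrite /G addr0 subrr.
have [s hs] := minorant hG G0.
exists s => y; have := hs (y - x); rewrite /G subrKC; lra.
Qed.

Lemma dotvN t (x y : 'cV[R]_t) : dotv x (- y) = - dotv x y.
Proof. by rewrite /dotv -sumrN; apply: eq_bigr => i _; rewrite mxE mulrN. Qed.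

Lemma mnormN a c (M : 'M[R]_(a, c)) : mnorm (- M) = mnorm M.
Proof.
by rewrite /mnorm; congr Num.sqrt; apply: eq_bigr => i _; apply: eq_bigr => j _; rewrite mxE sqrrN.
Qed.

Lemma mnorm_ge0 a c (M : 'M[R]_(a, c)) : 0 <= mnorm M.
Proof. exact: sqrtr_ge0. Qed.

Lemma conv_lip t (g : 'cV[R]_t -> R) (hg : convex_fun g) L
  (hL : forall x s, subgradient g x s -> mnorm s <= L) x y :
  `|g x - g y| <= L * mnorm (x - y).
Proof.
have [sx hx] := subgrad_exists hg x.
have [sy hy] := subgrad_exists hg y.
have h1 : g x - g y <= L * mnorm (x - y).
  have := hx y; rewrite -opprB dotvN => hxy.
  have := ler_norm (dotv sx (x - y)).
  have := dotv_CS sx (x - y).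
  have := ler_wpM2r (mnorm_ge0 (x - y)) (hL _ _ hx).
  lra.
have h2 : g y - g x <= L * mnorm (x - y).
  have := hy x => hyx.
  have := ler_norm (- dotv sy (x - y)); rewrite normrN.
  have := dotv_CS sy (x - y).
  have := ler_wpM2r (mnorm_ge0 (x - y)) (hL _ _ hy).
  lra.
rewrite ler_norml; apply/andP; split; lra.
Qed.

Lemma limit_th (q D : R) : 0 <= q -> 0 <= D ->
  (forall th, 0 <= th -> th < 1 -> q * th <= D) -> q <= D.
Proof.
move=> hq hD H.
case: (lerP q D) => // hlt; exfalso.
have qp : 0 < q by lra.
have := H ((q + D) / (2 * q)).
have e1 : q * ((q + D) / (2 * q)) = (q + D) / 2 by field; lra.
rewrite e1.
have a1 : 0 <= (q + D) / (2 * q) by apply: divr_ge0; lra.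
have a2 : (q + D) / (2 * q) < 1 by rewrite ltr_pdivrMr; lra.
move=> /(_ a1 a2); lra.
Qed.

Lemma growth t (mu : R) (F : 'cV[R]_t -> R)
  (hF : forall x y th, 0 <= th -> th <= 1 ->
     F (th *: x + (1 - th) *: y) <= th * F x + (1 - th) * F y - mu / 2 * th * (1 - th) * mnorm (x - y) ^+ 2)
  (hmu : 0 < mu) xs (hmin : forall y, F xs <= F y) y :
  mu / 2 * mnorm (xs - y) ^+ 2 <= F y - F xs.
Proof.
apply: limit_th.
- by apply: mulr_ge0; [lra| apply: sqr_ge0].
- by have := hmin y; lra.
move=> th h0 h1.
have := hF xs y th h0 (ltW h1).
have := hmin (th *: xs + (1 - th) *: y).
set q := mu / 2 * mnorm (xs - y) ^+ 2.
have -> : mu / 2 * th * (1 - th) * mnorm (xs - y) ^+ 2 = (1 - th) * (q * th) by rewrite /q; ring.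
move=> a b.
have c : (1 - th) * (q * th) <= (1 - th) * (F y - F xs) by lra.
by move: c; rewrite ler_pM2l //; lra.
Qed.

Lemma entryD a c (M N : 'M[R]_(a, c)) i j : (M + N) i j = M i j + N i j.
Proof. by rewrite mxE. Qed.
Lemma entryZ a c (M : 'M[R]_(a, c)) k i j : (k *: M) i j = k * M i j.
Proof. by rewrite mxE. Qed.

Lemma sumdiff k (a c d : 'I_k -> R) :
  \sum_(i < k) (a i - c i) * - - d i = \sum_(i < k) a i * d i - \sum_(i < k) c i * d i.
Proof. by rewrite -sumrB; apply: eq_bigr => i _; rewrite opprK mulrBl. Qed.

Lemma Lf_diff t n p m (A : 'M[R]_(t, n)) (B : 'M[R]_(p, t)) (b : 'cV[R]_p)
  (f : 'cV[R]_t -> R) (g : 'I_m -> 'cV[R]_t -> R) x (u v : 'cV[R]_(n + p + m)) :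
  Lf A B b f g x u - Lf A B b f g x v = \sum_i (u i 0 - v i 0) * - grad_d_j A B b g x i.
Proof.
rewrite !big_split_ord /= /grad_d_j.
under [\sum_(i < n) _]eq_bigr do rewrite !splitL.
under [\sum_(i < p) _]eq_bigr do rewrite splitL splitR.
under [\sum_(i < m) _]eq_bigr do rewrite splitR.
rewrite !sumdiff /Lf; ring.
Qed.

Lemma Lf_diff_j t n p m (A : 'M[R]_(t, n)) (B : 'M[R]_(p, t)) (b : 'cV[R]_p)
  (f : 'cV[R]_t -> R) (g : 'I_m -> 'cV[R]_t -> R) x (u v : 'cV[R]_(n + p + m)) j
  (huv : forall i : 'I_(n + p + m), i != j -> u i 0 = v i 0) :
  Lf A B b f g x u - Lf A B b f g x v = (u j 0 - v j 0) * - grad_d_j A B b g x j.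
Proof.
rewrite Lf_diff (bigD1 j) //= big1 ?addr0 // => i ne.
by rewrite huv // subrr mul0r.
Qed.

Lemma Lf_conv t n p m (A : 'M[R]_(t, n)) (B : 'M[R]_(p, t)) (b : 'cV[R]_p)
  (f : 'cV[R]_t -> R) (g : 'I_m -> 'cV[R]_t -> R)
  (hg : forall i : 'I_m, convex_fun (g i)) (u : 'cV[R]_(n + p + m)) (hu : inD u) x y th :
  0 <= th -> th <= 1 ->
  Lf A B b f g (th *: x + (1 - th) *: y) u - f (th *: x + (1 - th) *: y) <=
  th * (Lf A B b f g x u - f x) + (1 - th) * (Lf A B b f g y u - f y).
Proof.
move=> h0 h1.
rewrite /Lf.
set S1 := \sum_(i < n) _.
set S2 := \sum_(k < p) _.
set S3 := \sum_(k < m) _.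
set T1 := \sum_(i < n) _.
set T2 := \sum_(k < p) _.
set T3 := \sum_(k < m) _.
set U1 := \sum_(i < n) _.
set U2 := \sum_(k < p) _.
set U3 := \sum_(k < m) _.
have e1 : S1 = th * T1 + (1 - th) * U1.
  rewrite /S1 /T1 /U1 !mulr_sumr -big_split; apply: eq_bigr => i _ /=.
  rewrite mulmxDr -!scalemxAr !entryD !entryZ; ring.
have e2 : S2 = th * T2 + (1 - th) * U2.
  rewrite /S2 /T2 /U2 !mulr_sumr -big_split; apply: eq_bigr => i _ /=.
  rewrite mulmxDr -!scalemxAr !entryD !entryZ; ring.
have e3 : S3 <= th * T3 + (1 - th) * U3.
  rewrite /S3 /T3 /U3 !mulr_sumr -big_split; apply: ler_sum => i _ /=.
  have := ler_wpM2l (hu i) (hg i x y th h0 h1).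
  have -> : th * (u (rshift (n + p) i) 0 * g i x) + (1 - th) * (u (rshift (n + p) i) 0 * g i y)
     = u (rshift (n + p) i) 0 * (th * g i x + (1 - th) * g i y) by ring.
  by [].
rewrite e1 e2; lra.
Qed.

Lemma key2 t n p m (hn : (0 < n)%N) (A : 'M[R]_(t, n)) (B : 'M[R]_(p, t)) (b : 'cV[R]_p)
  (g : 'I_m -> 'cV[R]_t -> R) (mu : R) (Lg : 'I_m -> R) (hmu : 0 < mu)
  (hg : forall i : 'I_m, convex_fun (g i))
  (hLg : forall (i : 'I_m) (x s : 'cV[R]_t), subgradient (g i) x s -> mnorm s <= Lg i)
  (xu xv : 'cV[R]_t) (j : 'I_(n + p + m)) :
  exists c, 0 <= c /\ `|grad_d_j A B b g xu j - grad_d_j A B b g xv j| <= c * mnorm (xu - xv)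
     /\ Lconst A B Lg mu j = c ^+ 2 / mu.
Proof.
have n0 : n%:R != 0 :> R by rewrite pnatr_eq0 -lt0n.
have n0' : 0 < n%:R :> R by rewrite ltr0n.
rewrite /grad_d_j /Lconst.
case: (split j) => [j1|k]; [case: (split j1) => [i|k]|].
- exists (mnorm (col i A) / n%:R); split; first by apply: divr_ge0; [apply: mnorm_ge0|apply: ltW].
  split; last by field; apply/andP; split => //; apply: lt0r_neq0.
  have hX : (A^T *m xu) i 0 - (A^T *m xv) i 0 = \sum_l A l i * (xu - xv) l 0.
    rewrite !mxE -sumrB; apply: eq_bigr => l _; rewrite !mxE; ring.
  have hc : mnorm (col i A) = Num.sqrt (\sum_l A l i ^+ 2).
    by rewrite mnorm_col; congr Num.sqrt; apply: eq_bigr => l _; rewrite mxE.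
  have := CS (fun l => A l i) (fun l => (xu - xv) l 0).
  rewrite -hX -hc -mnorm_col => H.
  have -> : - ((A^T *m xu) i 0 / n%:R) - - ((A^T *m xv) i 0 / n%:R)
     = - (((A^T *m xu) i 0 - (A^T *m xv) i 0) / n%:R) by ring.
  rewrite normrN normrM normfV normr_nat mulrAC.
  by apply: ler_wpM2r => //; rewrite invr_ge0 ltW.
- exists (mnorm (row k B)); split; first exact: mnorm_ge0.
  split => //.
  have hX : (B *m xu + b) k 0 - (B *m xv + b) k 0 = \sum_l B k l * (xu - xv) l 0.
    have -> : \sum_l B k l * (xu - xv) l 0 = (\sum_l B k l * xu l 0) - \sum_l B k l * xv l 0.
      by rewrite -sumrB; apply: eq_bigr => l _; rewrite !mxE; ring.
    rewrite !mxE; ring.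
  have hc : mnorm (row k B) = Num.sqrt (\sum_l B k l ^+ 2).
    by rewrite /mnorm big_ord1; congr Num.sqrt; apply: eq_bigr => l _; rewrite mxE.
  have := CS (fun l => B k l) (fun l => (xu - xv) l 0).
  rewrite -hX -hc -mnorm_col => H.
  have -> : - (B *m xu + b) k 0 - - (B *m xv + b) k 0
     = - ((B *m xu + b) k 0 - (B *m xv + b) k 0) by ring.
  by rewrite normrN.
- exists (Lg k); split.
    have [s hs] := subgrad_exists (hg k) xu.
    have := hLg k _ _ hs; have := mnorm_ge0 s; lra.
  split => //.
  have -> : - g k xu - - g k xv = - (g k xu - g k xv) by ring.
  rewrite normrN; exact: (conv_lip (hg k) (hLg k)).
Qed.

End Helpers.

Theorem lemma1 (R : realType) (n t p m : nat) (hn : (0 < n)%N) (ht : (0 < t)%N)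
  (A : 'M[R]_(t, n)) (B : 'M[R]_(p, t)) (b : 'cV[R]_p)
  (f : 'cV[R]_t -> R) (g : 'I_m -> 'cV[R]_t -> R)
  (mu : R) (Lg : 'I_m -> R)
  (hmu : 0 < mu) (hf : strongly_convex mu f)
  (hg : forall i : 'I_m, convex_fun (g i))
  (hLg : forall (i : 'I_m) (x s : 'cV[R]_t), subgradient (g i) x s -> mnorm s <= Lg i)
  (u v : 'cV[R]_(n + p + m)) (xu xv : 'cV[R]_t)
  (hu : inD u) (hv : inD v)
  (hxu : forall y : 'cV[R]_t, Lf A B b f g xu u <= Lf A B b f g y u)
  (hxv : forall y : 'cV[R]_t, Lf A B b f g xv v <= Lf A B b f g y v)
  (j : 'I_(n + p + m)) (huv : forall i : 'I_(n + p + m), i != j -> u i 0 = v i 0) :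
  `| grad_d_j A B b g xu j - grad_d_j A B b g xv j |
    <= Lconst A B Lg mu j * mnorm (u - v).
Proof.
have [c [c0 [hc hL]]] := key2 hn A B b hmu hg hLg xu xv j.
rewrite hL.
have huvn : mnorm (u - v) = `|u j 0 - v j 0|.
  rewrite /mnorm (bigD1 j) //= big_ord1 big1 ?addr0.
    by rewrite !mxE sqrtr_sqr.
  move=> i ne; rewrite big_ord1 !mxE huv // subrr expr0n //.
rewrite huvn.
have Su : forall (w : 'cV[R]_(n + p + m)), inD w -> forall x y th, 0 <= th -> th <= 1 ->
    (fun z => Lf A B b f g z w) (th *: x + (1 - th) *: y) <=
    th * (fun z => Lf A B b f g z w) x + (1 - th) * (fun z => Lf A B b f g z w) y
    - mu / 2 * th * (1 - th) * mnorm (x - y) ^+ 2.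
  move=> w hw x y th h0 h1 /=.
  have := hf x y th h0 h1; have := Lf_conv A B b f hg hw x y h0 h1; lra.
have gu := growth (Su u hu) hmu hxu xv; simpl in gu.
have gv := growth (Su v hv) hmu hxv xu; simpl in gv.
rewrite -opprB mnormN in gv.
have du := Lf_diff_j A B b f g xu huv.
have dv := Lf_diff_j A B b f g xv huv.
set r := mnorm (xu - xv) in hc gu gv.
set dl := u j 0 - v j 0 in du dv *.
set Gu := grad_d_j A B b g xu j in hc du *.
set Gv := grad_d_j A B b g xv j in hc dv *.
have k1 : mu * r ^+ 2 <= dl * (Gu - Gv) by lra.
have k2 : dl * (Gu - Gv) <= `|dl| * `|Gu - Gv| by rewrite -normrM ler_norm.
have r0 : 0 <= r by apply: mnorm_ge0.
have a0 : 0 <= `|dl| by apply: normr_ge0.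
case: (eqVneq r 0) => [rz|rnz].
  have : `|Gu - Gv| <= 0 by move: hc; rewrite rz mulr0.
  have : 0 <= c ^+ 2 / mu * `|dl| by apply: mulr_ge0 => //; apply: divr_ge0; [apply: sqr_ge0|apply: ltW].
  lra.
have rp : 0 < r by rewrite lt0r rnz.
have h3 : mu * r <= `|dl| * c.
  have : (mu * r) * r <= (`|dl| * c) * r.
    have := ler_wpM2l a0 hc.
    have -> : mu * r * r = mu * r ^+ 2 by rewrite expr2 mulrA.
    have -> : `|dl| * c * r = `|dl| * (c * r) by rewrite mulrA.
    lra.
  by rewrite ler_pM2r.
rewrite mulrAC ler_pdivlMr //.
have h4 := ler_wpM2r (ltW hmu) hc.
have h5 := ler_wpM2l c0 h3.
have -> : c ^+ 2 * `|dl| = c * (`|dl| * c) by rewrite expr2; ring.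
lra.
Qed.
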